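(* Let $n \ge 2$ be an integer. If $M$ is a real $n\times n$ matrix whose entries are a permutation of $0,1,\dots,n^2-1$, then $$|\det M| \le n^n\,\frac{n^2-1}{2}\left(\frac{n^3+n^2+n+1}{12}\right)^{\frac{n-1}{2}}.$$ If $M$ is a real $n\times n$ matrix whose entries are a permutation of $1,2,\dots,n^2$, then $$|\det M| \le n^n\,\frac{n^2+1}{2}\left(\frac{n^3+n^2+n+1}{12}\right)^{\frac{n-1}{2}}.$$ *)

(* Defs.v *)
From HB Require Import structures.
From mathcomp Require Import all_boot all_order all_algebra.
Set Implicit Arguments. Unset Strict Implicit. Unset Printing Implicit Defensive.
Import Order.TTheory GRing.Theory Num.Theory.
Local Open Scope ring_scope.

Definition mx_entries (R : Type) (n : nat) (M : 'M[R]_n) : seq R :=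
  [seq M ij.1 ij.2 | ij <- enum {: 'I_n * 'I_n}].

Definition entries_perm_from (R : numDomainType) (n : nat) (a : nat) (M : 'M[R]_n) : bool :=
  perm_eq (mx_entries M) [seq (k%:R : R) | k <- iota a (n ^ 2)].

(* Main.v *)
Require Import Defs.
From HB Require Import structures.
From mathcomp Require Import all_boot all_order all_algebra.
From mathcomp Require Import ring lra.
Set Implicit Arguments. Unset Strict Implicit. Unset Printing Implicit Defensive.
Import Order.TTheory GRing.Theory Num.Theory.
Local Open Scope ring_scope.

Section Had.
Variable R : rcfType.

Lemma gram_diag m n (X : 'M[R]_(m, n)) j :
  (X^T *m X) j j = \sum_i X i j ^+ 2.
Proof. by rewrite !mxE; apply: eq_bigr => i _; rewrite mxE expr2. Qed.

Lemma gram_diag_ge0 m n (X : 'M[R]_(m, n)) j : 0 <= (X^T *m X) j j.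
Proof. by rewrite gram_diag sumr_ge0 // => i _; rewrite sqr_ge0. Qed.

Lemma hadamard_gram m n (A : 'M[R]_(m, n)) :
  \det (A^T *m A) <= \prod_(j < n) (A^T *m A) j j.
Proof.
elim: n A => [|n IH] A; first by rewrite det_mx00 big_ord0.
move: A; change (n.+1) with (1 + n)%N => A.
rewrite -[A]hsubmxK; move: (lsubmx A) (rsubmx A) => a B.
rewrite tr_row_mx mul_col_row big_split_ord big_ord1 /= block_mxEul.
under eq_bigr do rewrite block_mxEdr.
set s := (a^T *m a) 0 0.
have hs : 0 <= s by rewrite gram_diag_ge0.
have Bge0 : 0 <= \prod_(j < n) (B^T *m B) j j.
  by apply: prodr_ge0 => j _; apply: gram_diag_ge0.
have [s0|sn0] := eqVneq s 0.
  have a0 : a = 0.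
    apply/matrixP => i k; rewrite (ord1 k) mxE.
    move: s0; rewrite /s gram_diag => /eqP; rewrite psumr_eq0; last first.
      by move=> i0 _; apply: sqr_ge0.
    by move/allP/(_ i (mem_index_enum _)); rewrite sqrf_eq0 => /eqP.
  rewrite a0 trmx0 !mul0mx mulmx0 det_ublock det_mx11 mxE mul0r.
  by rewrite mulr_ge0.
have spos : 0 < s by rewrite lt_def sn0 hs.
pose c := s^-1 *: (a^T *m B).
pose U := block_mx (1%:M : 'M[R]_1) (-c) 0 (1%:M : 'M[R]_n).
have detU : \det U = 1 by rewrite det_ublock !det1 mulr1.
have eG : block_mx (a^T *m a) (a^T *m B) (B^T *m a) (B^T *m B)
          = (row_mx a B)^T *m row_mx a B by rewrite tr_row_mx mul_col_row.
have -> : \det (block_mx (a^T *m a) (a^T *m B) (B^T *m a) (B^T *m B))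
    = \det ((row_mx a B *m U)^T *m (row_mx a B *m U)).
  have -> : (row_mx a B *m U)^T *m (row_mx a B *m U)
     = U^T *m ((row_mx a B)^T *m row_mx a B) *m U by rewrite trmx_mul !mulmxA.
  by rewrite !det_mulmx det_tr detU -eG mulr1 mul1r.
have -> : row_mx a B *m U = row_mx a (B - a *m c).
  rewrite mul_row_block !mulmx1 !mulmx0 addr0 mulmxN.
  by rewrite addrC.
pose B' : 'M[R]_(m, n) := B - a *m c.
rewrite -/B'.
have aa : a^T *m a = s%:M by rewrite {1}[a^T *m a]mx11_scalar.
have aB' : a^T *m B' = 0.
  rewrite /B' mulmxBr mulmxA aa mul_scalar_mx /c scalerA mulfV //.
  by rewrite scale1r subrr.
have B'a : B'^T *m a = 0 by rewrite -[a]trmxK -trmx_mul aB' trmx0.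
rewrite tr_row_mx mul_col_row aB' det_lblock det_mx11 -/s.
rewrite ler_pM2l //.
have eBB : B'^T *m B' = B^T *m B - s^-1 *: ((a^T *m B)^T *m (a^T *m B)).
  rewrite {2}/B' mulmxBr (mulmxA B'^T) B'a mul0mx subr0.
  rewrite /B' linearB /= mulmxBl trmx_mul /c linearZ /= -scalemxAl.
  by rewrite -scalemxAl -mulmxA.
apply: le_trans (IH B') _.
apply: ler_prod => j _; rewrite gram_diag_ge0 /= eBB.
rewrite !mxE big_ord1 !mxE.
by rewrite lerBlDr lerDl mulr_ge0 ?invr_ge0 // -expr2 sqr_ge0.
Qed.


Lemma bernoulli (k : nat) (y : R) : 0 <= y -> 1 + k%:R * y <= (1 + y) ^+ k.
Proof.
move=> y0; elim: k => [|k IH]; first by rewrite mul0r addr0 expr0.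
rewrite exprS.
have h1 : 0 <= 1 + y by lra.
have := ler_wpM2l h1 IH.
have : 0 <= k%:R * y * y by rewrite !mulr_ge0 ?ler0n.
rewrite -natr1; nra.
Qed.

Lemma key_scalar (k : nat) (a A0 F : R) : (0 < k)%N -> 0 < A0 -> A0 <= a -> a <= F ->
  F <= (k.+1)%:R * A0 ->
  a * ((F - a) / k%:R) ^+ k <= A0 * ((F - A0) / k%:R) ^+ k.
Proof.
move=> k0 hA0 hA0a haF hF.
have kp : 0 < (k%:R : R) by rewrite ltr0n.
pose y := (a - A0) / (k%:R * A0).
have y0 : 0 <= y by rewrite /y divr_ge0 ?subr_ge0 // mulr_ge0 // ltW.
have ha : a = A0 * (1 + k%:R * y).
  by rewrite /y; field; rewrite !lt0r_neq0.
have hb : a <= A0 * (1 + y) ^+ k.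
  by rewrite {1}ha; apply: ler_wpM2l; [exact: ltW | exact: bernoulli].
have hFa : 0 <= (F - a) / k%:R by rewrite divr_ge0 ?subr_ge0 // ltW.
apply: le_trans (ler_wpM2r (exprn_ge0 k hFa) hb) _.
rewrite -mulrA -exprMn; apply: ler_wpM2l; first exact: ltW.
apply: lerXn2r; rewrite ?nnegrE.
- by rewrite mulr_ge0 // addr_ge0.
- by apply: divr_ge0; [rewrite subr_ge0; exact: le_trans hA0a haF | exact: ltW].
have hyk : y * (F - a) <= a - A0.
  have -> : a - A0 = y * (k%:R * A0) by rewrite /y divfK // mulf_neq0 // lt0r_neq0.
  apply: ler_wpM2l => //.
  move: hF; rewrite -natr1; lra.
rewrite mulrA ler_pM2r ?invr_gt0 //; lra.
Qed.

Lemma householder (k : nat) : (0 < k)%N ->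
  exists H : 'M[R]_k.+1, H *m H^T = 1%:M /\
    forall i, H i 0 = (Num.sqrt (k.+1)%:R)^-1.
Proof.
move=> k0.
set r : R := Num.sqrt (k.+1)%:R.
have hr2 : r ^+ 2 = (k.+1)%:R by rewrite sqr_sqrtr ?ler0n.
have hr : 0 < r by rewrite sqrtr_gt0 ltr0n.
have hr1 : r != 1.
  apply/eqP => r1; move: hr2; rewrite r1 expr1n => /eqP.
  rewrite -[X in X == _]/((1%N)%:R : R) eqr_nat eqSS => /eqP k00.
  by rewrite -k00 in k0.
pose w : 'cV[R]_k.+1 := \col_i ((i == 0)%:R - r^-1).
pose s : R := 2 - 2 / r.
have ws : w^T *m w = s%:M.
  apply/matrixP => i j; rewrite (ord1 i) (ord1 j) !mxE big_ord_recl /= !mxE /=.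
  under eq_bigr do rewrite !mxE /=.
  rewrite sumr_const card_ord /= mulr1n.
  have hk : (k%:R : R) = r ^+ 2 - 1 by rewrite hr2 -natr1; lra.
  rewrite -(mulr_natr _ k) hk /s; field; exact: lt0r_neq0.
have sn0 : s != 0.
  rewrite /s subr_eq0; apply: contra hr1 => /eqP h.
  have h2 : 2 / r * r = 2 * r by rewrite -h.
  rewrite divfK ?lt0r_neq0 // in h2.
  apply/eqP; have : (2 : R) != 0 by rewrite pnatr_eq0.
  move=> h20; apply: (mulfI h20); by rewrite mulr1.
pose c : R := 2 / s.
pose P : 'M[R]_k.+1 := w *m w^T.
have PT : P^T = P by rewrite /P trmx_mul trmxK.
have PP : P *m P = s *: P by rewrite /P mulmxA -(mulmxA w) ws mul_mx_scalar scalemxAl.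
have HT : (1%:M - c *: P)^T = 1%:M - c *: P.
  apply/matrixP => i j; rewrite !mxE eq_sym; congr (_ - _ * _).
  by rewrite !big_ord1 !mxE mulrC.
exists (1%:M - c *: P); split.
  rewrite HT mulmxBl mulmxBr mul1mx mulmxBr mulmx1.
  rewrite mul1mx -scalemxAl -scalemxAr PP !scalerA.
  have -> : c * c * s = c + c by rewrite /c; field.
  rewrite scalerDl; set X := c *: P.
  have -> : X - (X + X) = - X by rewrite opprD addrA subrr sub0r.
  by rewrite opprK subrK.
move=> i; rewrite !mxE big_ord1 !mxE eqxx -/r /c.

set d := (i == 0)%:R. move: sn0; rewrite /s => sn0.
have r0 : r != 0 by rewrite lt0r_neq0.
have -> : (true%:R : R) = 1 by [].
field.
rewrite r0 /=; apply/eqP => h; move/eqP: hr1; apply; lra.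
Qed.


Lemma cauchy_sum (n : nat) (f : 'I_n -> R) :
  (\sum_i f i) ^+ 2 <= n%:R * \sum_i f i ^+ 2.
Proof.
case: n f => [|n] f; first by rewrite !big_ord0 mul0r expr0n.
set s1 := \sum_i f i; set s2 := \sum_i f i ^+ 2.
pose c := s1 / n.+1%:R.
have hn : (n.+1%:R : R) != 0 by rewrite pnatr_eq0.
have e : \sum_i (f i - c) ^+ 2 = s2 - 2 * c * s1 + c ^+ 2 * n.+1%:R.
  have e1 : forall i, (f i - c) ^+ 2 = (f i ^+ 2 - 2 * c * f i) + c ^+ 2.
    by move=> i; ring.
  under eq_bigr do rewrite e1.
  rewrite big_split /= sumrB -mulr_sumr sumr_const card_ord mulr_natr.
  by [].
have h0 : 0 <= \sum_i (f i - c) ^+ 2 by apply: sumr_ge0 => i _; apply: sqr_ge0.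
rewrite e in h0.
have h1 : 0 <= n.+1%:R * (s2 - 2 * c * s1 + c ^+ 2 * n.+1%:R).
  by rewrite mulr_ge0 ?ler0n.
have e2 : n.+1%:R * (s2 - 2 * c * s1 + c ^+ 2 * n.+1%:R) = n.+1%:R * s2 - s1 ^+ 2.
  by rewrite /c; field; rewrite addrC natr1.
rewrite e2 in h1.
by rewrite -subr_ge0.
Qed.

Lemma main_gen (k : nat) (M : 'M[R]_k.+1) (S F : R) : (0 < k)%N ->
  \sum_i \sum_j M i j = S -> \sum_i \sum_j M i j ^+ 2 = F ->
  0 < (S / k.+1%:R) ^+ 2 -> F <= k.+1%:R * (S / k.+1%:R) ^+ 2 ->
  \det M ^+ 2 <= (S / k.+1%:R) ^+ 2 * ((F - (S / k.+1%:R) ^+ 2) / k%:R) ^+ k.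
Proof.
move=> k0 hS hF hA hFA.
have [H [HH H0]] := householder k0.
set r := Num.sqrt _ in H0.
pose G := (M *m H)^T *m (M *m H).
have detH : \det H ^+ 2 = 1.
  by move/(congr1 determinant): HH; rewrite det_mulmx det_tr det1 expr2.
have detG : \det G = \det M ^+ 2.
  by rewrite /G det_mulmx det_tr det_mulmx -expr2 exprMn detH mulr1.
have hG : \det G <= \prod_j G j j := hadamard_gram _.
rewrite big_ord_recl detG in hG.
pose a := G 0 0.
pose x j := G (lift 0 j) (lift 0 j).
have hx : forall j, 0 <= x j by move=> j; apply: gram_diag_ge0.
have hsum : a + \sum_(j < k) x j = F.
  rewrite /a /x -(big_ord_recl k (fun j => G j j)).
  have -> : \sum_(j < k.+1) G j j = \tr G by [].
  rewrite /G trmx_mul -!mulmxA mxtrace_mulC -!mulmxA HH mulmx1.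
  rewrite /mxtrace -hF exchange_big /=; apply: eq_bigr => j _.
  by rewrite gram_diag.
have a0 : 0 <= a by apply: gram_diag_ge0.
have aF : a <= F by rewrite -hsum lerDl sumr_ge0.
have AGM : \prod_(j < k) x j <= ((F - a) / k%:R) ^+ k.
  case: (@leif_AGM _ _ predT x (fun j _ => hx j)) => h _; move: h.
  have eF : F - a = \sum_(j < k) x j by rewrite -hsum; lra.
  by rewrite cardT size_enum_ord eF.
have ha : (S / k.+1%:R) ^+ 2 <= a.
  have r2 : r ^+ 2 = k.+1%:R by rewrite sqr_sqrtr ?ler0n.
  have hn : (k.+1%:R : R) != 0 by rewrite pnatr_eq0.
  have -> : a = (\sum_i (\sum_j M i j) ^+ 2) / k.+1%:R.
    rewrite /a /G gram_diag mulr_suml; apply: eq_bigr => i _.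
    rewrite mxE; under eq_bigr do rewrite H0.
    by rewrite -mulr_suml exprMn exprVn r2.
  have := cauchy_sum (fun i => \sum_j M i j); rewrite hS.
  move=> hc; rewrite expr_div_n ler_pdivrMr ?ltr0n //.
  rewrite mulrAC ler_pdivlMr; try by rewrite ?exprn_gt0 ltr0n.
  rewrite [X in _ <= _ * X]expr2 mulrA ler_pM2r ?ltr0n // mulrC //.
  by apply: exprn_gt0; rewrite ltr0n.
apply: (le_trans hG).
apply: (le_trans (ler_wpM2l a0 AGM)).
by apply: key_scalar.
Qed.


Lemma finish k (M : 'M[R]_k.+2) (S F mu : R) :
  let x := (k.+2)%:R : R in let sig := (x ^+ 3 + x ^+ 2 + x + 1) / 12 in
  \sum_i \sum_j M i j = S -> \sum_i \sum_j M i j ^+ 2 = F ->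
  S = x * x * mu -> F - x ^+ 2 * mu ^+ 2 = (x - 1) * x ^+ 2 * sig -> 0 < mu ->
  F <= x * (x ^+ 2 * mu ^+ 2) ->
  `|\det M| <= x ^+ k.+2 * mu * (Num.sqrt sig) ^+ k.+1.
Proof.
move=> x sig hS hF eS eF mu0 hFA.
have x2 : 2 <= x by rewrite /x (ler_nat R 2).
have x0 : x != 0 by apply: lt0r_neq0; lra.
have hk : (k.+1%:R : R) = x - 1 by rewrite /x -natr1; lra.
have sig0 : 0 <= sig.
  have xx : 0 <= x by lra.
  have := exprn_ge0 3 xx; have := exprn_ge0 2 xx; rewrite /sig; lra.
have := @main_gen k.+1 M S F isT hS hF.
rewrite -/x hk.
clearbody sig x.
have eA : (S / x) ^+ 2 = x ^+ 2 * mu ^+ 2 by rewrite eS; field.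
rewrite eA eF.
have xm : x - 1 != 0 by apply: lt0r_neq0; lra.
have -> : (x - 1) * x ^+ 2 * sig / (x - 1) = x ^+ 2 * sig by field.
have A0 : 0 < x ^+ 2 * mu ^+ 2 by rewrite mulr_gt0 // exprn_gt0 //; lra.
move=> h; have {}h := h A0 hFA.
set q := Num.sqrt sig.
have q2 : q ^+ 2 = sig by rewrite sqr_sqrtr.
have q0 : 0 <= q by rewrite sqrtr_ge0.
have P0 : 0 <= x ^+ k.+2 * mu * q ^+ k.+1.
  have xx : 0 <= x by lra.
  apply: mulr_ge0; [apply: mulr_ge0; [exact: exprn_ge0 | exact: ltW] | exact: exprn_ge0].
rewrite -(@ler_pXn2r _ 2) // ?nnegrE ?normr_ge0 //.
rewrite -normrX ger0_norm ?sqr_ge0 //.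
apply: (le_trans h); rewrite le_eqVlt; apply/orP; left; apply/eqP.
rewrite -q2 (exprS x k.+1) exprMn -!exprM (mulnC 2) !exprM.
set X := x ^+ k.+1; set Q := q ^+ k.+1.
ring.
Qed.

Lemma entries_sum n a (M : 'M[R]_n) (f : R -> R) : entries_perm_from a M ->
  \sum_i \sum_j f (M i j) = \sum_(k <- iota a (n ^ 2)) f k%:R.
Proof.
move=> hp; rewrite pair_big /=.
have e : \sum_(y <- mx_entries M) f y = \sum_(y <- [seq (k%:R : R) | k <- iota a (n ^ 2)]) f y.
  exact: perm_big.
transitivity (\sum_(y <- mx_entries M) f y); last by rewrite e big_map.
by rewrite /mx_entries big_map big_enum.
Qed.

Lemma sum0 N : \sum_(k <- iota 0 N) (k%:R : R) = N%:R * (N%:R - 1) / 2.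
Proof.
elim: N => [|N IH]; first by rewrite big_nil mul0r mul0r.
rewrite -[N.+1]addn1 iotaD big_cat IH /= big_cons big_nil add0n natrD; field; done.
Qed.

Lemma sq0 N : \sum_(k <- iota 0 N) (k%:R : R) ^+ 2 = (N%:R - 1) * N%:R * (2 * N%:R - 1) / 6.
Proof.
elim: N => [|N IH]; first by rewrite big_nil mulr0 mul0r mul0r.
rewrite -[N.+1]addn1 iotaD big_cat IH /= big_cons big_nil add0n natrD; field; done.
Qed.

Lemma sum1 N : \sum_(k <- iota 1 N) (k%:R : R) = N%:R * (N%:R + 1) / 2.
Proof.
elim: N => [|N IH]; first by rewrite big_nil mul0r mul0r.
rewrite -[N.+1]addn1 iotaD big_cat IH /= big_cons big_nil add1n -addn1 !natrD; field; done.
Qed.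

Lemma sq1 N : \sum_(k <- iota 1 N) (k%:R : R) ^+ 2 = N%:R * (N%:R + 1) * (2 * N%:R + 1) / 6.
Proof.
elim: N => [|N IH]; first by rewrite big_nil !mul0r.
rewrite -[N.+1]addn1 iotaD big_cat IH /= big_cons big_nil add1n -addn1 !natrD; field; done.
Qed.

Lemma c0_S (x : R) : x ^+ 2 * (x ^+ 2 - 1) / 2 = x * x * ((x ^+ 2 - 1) / 2).
Proof. by field. Qed.
Lemma c0_F (x : R) : (x ^+ 2 - 1) * x ^+ 2 * (2 * x ^+ 2 - 1) / 6 - x ^+ 2 * ((x ^+ 2 - 1) / 2) ^+ 2
  = (x - 1) * x ^+ 2 * ((x ^+ 3 + x ^+ 2 + x + 1) / 12).
Proof. by field. Qed.
Lemma c0_mu (x : R) : 2 <= x -> 0 < (x ^+ 2 - 1) / 2.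
Proof. move=> h; nra. Qed.
Lemma c0_ineq (x : R) : 2 <= x ->
  (x ^+ 2 - 1) * x ^+ 2 * (2 * x ^+ 2 - 1) / 6 <= x * (x ^+ 2 * ((x ^+ 2 - 1) / 2) ^+ 2).
Proof.
move=> h; rewrite -subr_ge0.
have -> : x * (x ^+ 2 * ((x ^+ 2 - 1) / 2) ^+ 2) - (x ^+ 2 - 1) * x ^+ 2 * (2 * x ^+ 2 - 1) / 6
  = x ^+ 2 * (x ^+ 2 - 1) * ((x - 2) * (3 * x ^+ 2 + 2 * x + 1) + 4) / 12 by field.
have h1 : 0 <= x ^+ 2 - 1 by nra.
have h2 : 0 <= (x - 2) * (3 * x ^+ 2 + 2 * x + 1) by apply: mulr_ge0; nra.
apply: divr_ge0; last by [].
apply: mulr_ge0; [apply: mulr_ge0 => //; exact: sqr_ge0 | lra].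
Qed.
Lemma c1_S (x : R) : x ^+ 2 * (x ^+ 2 + 1) / 2 = x * x * ((x ^+ 2 + 1) / 2).
Proof. by field. Qed.
Lemma c1_F (x : R) : x ^+ 2 * (x ^+ 2 + 1) * (2 * x ^+ 2 + 1) / 6 - x ^+ 2 * ((x ^+ 2 + 1) / 2) ^+ 2
  = (x - 1) * x ^+ 2 * ((x ^+ 3 + x ^+ 2 + x + 1) / 12).
Proof. by field. Qed.
Lemma c1_mu (x : R) : 2 <= x -> 0 < (x ^+ 2 + 1) / 2.
Proof. move=> h; nra. Qed.
Lemma c1_ineq (x : R) : 2 <= x ->
  x ^+ 2 * (x ^+ 2 + 1) * (2 * x ^+ 2 + 1) / 6 <= x * (x ^+ 2 * ((x ^+ 2 + 1) / 2) ^+ 2).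
Proof.
move=> h; rewrite -subr_ge0.
have -> : x * (x ^+ 2 * ((x ^+ 2 + 1) / 2) ^+ 2) - x ^+ 2 * (x ^+ 2 + 1) * (2 * x ^+ 2 + 1) / 6
  = x ^+ 2 * (x ^+ 2 + 1) * ((x - 2) * (3 * x ^+ 2 + 2 * x + 7) + 12) / 12 by field.
have h1 : 0 <= x ^+ 2 + 1 by nra.
have h2 : 0 <= (x - 2) * (3 * x ^+ 2 + 2 * x + 7) by apply: mulr_ge0; nra.
apply: divr_ge0; last by [].
apply: mulr_ge0; [apply: mulr_ge0 => //; exact: sqr_ge0 | lra].
Qed.

End Had.

Theorem mainTheorem8 (R : rcfType) (n : nat) (hn : (2 <= n)%N) :
  (forall M : 'M[R]_n, entries_perm_from 0 M ->
     `|\det M| <= (n%:R) ^+ n * (((n%:R) ^+ 2 - 1) / 2)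
                  * (Num.sqrt (((n%:R) ^+ 3 + (n%:R) ^+ 2 + n%:R + 1) / 12)) ^+ (n - 1))
  /\
  (forall M : 'M[R]_n, entries_perm_from 1 M ->
     `|\det M| <= (n%:R) ^+ n * (((n%:R) ^+ 2 + 1) / 2)
                  * (Num.sqrt (((n%:R) ^+ 3 + (n%:R) ^+ 2 + n%:R + 1) / 12)) ^+ (n - 1)).
Proof.
case: n hn => [|[|k]] // _.
rewrite subn1 /=.
have x2 : (2 : R) <= k.+2%:R by rewrite (ler_nat R 2).
have hN : ((k.+2 ^ 2)%:R : R) = k.+2%:R ^+ 2 by rewrite natrX.
split => M hM.
- have hS := entries_sum (fun y => y) hM; rewrite sum0 hN in hS.
  have hF := entries_sum (fun y => y ^+ 2) hM; rewrite sq0 hN in hF.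
  apply: (@finish R k M _ _ ((k.+2%:R ^+ 2 - 1) / 2) hS hF).
  + exact: c0_S.
  + exact: c0_F.
  + exact: c0_mu.
  + exact: c0_ineq.
- have hS := entries_sum (fun y => y) hM; rewrite sum1 hN in hS.
  have hF := entries_sum (fun y => y ^+ 2) hM; rewrite sq1 hN in hF.
  apply: (@finish R k M _ _ ((k.+2%:R ^+ 2 + 1) / 2) hS hF).
  + exact: c1_S.
  + exact: c1_F.
  + exact: c1_mu.
  + exact: c1_ineq.
Qed.
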